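(* Let $N, D_1, D_2$ be positive integers. Let $f^{[n]}_{\mathrm{DINOv2}}$ ($n=1,\dots,N$) map images to $\mathbb{R}^{D_1}$ (patch features of a pretrained DINOv2 encoder), let $\mathrm{DiffEnc}^{[n]}$ ($n=1,\dots,N$) map images to $\mathbb{R}^{D_2}$ (the $n$-th patch token of a diffusion model's hidden representation at timestep $t=0$), and let $g_\phi:\mathbb{R}^{D_2}\to\mathbb{R}^{D_1}$ be a projection head. Assume all feature embeddings in the DINOv2 embedding space are $\ell_2$-normalized, i.e. $\|f^{[n]}_{\mathrm{DINOv2}}(u)\|_2 = 1$ and $\|g_\phi(\mathrm{DiffEnc}^{[n]}(u))\|_2=1$ for all images $u$ and all $n$. Let $x\sim p_X$ be a ground-truth image, $\hat x \sim p_{\hat X\mid Y}$ its reconstruction produced by any reconstruction method (with marginal law $p_{\hat X}$), and $\bar x\sim p_{\bar X}$ a proxy approximation of $x$, all random variables on a common probability space. Define $$\mathrm{REPA}(\bar x,\hat x)=\frac1N\sum_{n=1}^N \cos\!\Big(f^{[n]}_{\mathrm{DINOv2}}(\bar x),\, g_\phi\big(\mathrm{DiffEnc}^{[n]}(\hat x)\big)\Big),\qquad \mu_f(u)=\frac1N\sum_{n=1}^N f^{[n]}_{\mathrm{DINOv2}}(u),$$ $$\mathrm{ApproxErr}(x,\bar x)=\frac1N\sum_{n=1}^N\big\|f^{[n]}_{\mathrm{DINOv2}}(x)-f^{[n]}_{\mathrm{DINOv2}}(\bar x)\big\|_2^2,\qquad \mathrm{MisREPA}(u)=\frac1N\sum_{n=1}^N\big\|f^{[n]}_{\mathrm{DINOv2}}(u)-g_\phi\big(\mathrm{DiffEnc}^{[n]}(u)\big)\big\|_2^2,$$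 and $\mathrm{MMD}_{\mathrm{DINOv2}}(p_X,p_{\hat X})=\big\|\mathbb{E}_x[\mu_f(x)]-\mathbb{E}_{\hat x}[\mu_f(\hat x)]\big\|_2^2$. Then $$\mathbb{E}_{\hat x,\bar x}\big[\mathrm{REPA}(\bar x,\hat x)\big]\le 1-\frac18\,\mathrm{MMD}_{\mathrm{DINOv2}}(p_X,p_{\hat X})+\frac12\,\mathbb{E}_{x,\bar x}\big[\mathrm{ApproxErr}(x,\bar x)\big]+\frac14\,\mathbb{E}_{\hat x}\big[\mathrm{MisREPA}(\hat x)\big].$$
   Context: $\cos(a,b)=\langle a,b\rangle/(\|a\|_2\|b\|_2)$. Images are elements of a fixed Euclidean space; $f_{\mathrm{DINOv2}}$, $\mathrm{DiffEnc}$, $g_\phi$ are fixed measurable maps, and all expectations are assumed finite (they are, since all features considered are unit vectors or bounded). The expectations are taken under the joint law of $(x,\bar x,\hat x)$. *)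

(* Defs.v *)
From HB Require Import structures.
From mathcomp Require Import all_boot all_order all_algebra.
From mathcomp Require Import all_classical all_reals all_analysis.
Set Implicit Arguments. Unset Strict Implicit. Unset Printing Implicit Defensive.
Import Order.TTheory GRing.Theory Num.Theory.
Local Open Scope ring_scope.

Definition dotv {R : realType} {D : nat} (a b : 'rV[R]_D) : R :=
  \sum_(i < D) a 0 i * b 0 i.
Definition norm2 {R : realType} {D : nat} (a : 'rV[R]_D) : R :=
  Num.sqrt (dotv a a).
Definition cosv {R : realType} {D : nat} (a b : 'rV[R]_D) : R :=
  dotv a b / (norm2 a * norm2 b).

Definition Ex {d} {Omega : measurableType d} {R : realType}
  (P : probability Omega R) (X : Omega -> R) : R := Rintegral P setT X.

Definition Exv {d} {Omega : measurableType d} {R : realType} {D : nat}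
  (P : probability Omega R) (X : Omega -> 'rV[R]_D) : 'rV[R]_D :=
  \row_(i < D) Ex P (fun w => X w 0 i).

Section Quantities.
Context {R : realType} {Img : Type} {N D1 D2 : nat}
  (f : 'I_N -> Img -> 'rV[R]_D1) (Enc : 'I_N -> Img -> 'rV[R]_D2)
  (g : 'rV[R]_D2 -> 'rV[R]_D1).

Definition REPA (xb xh : Img) : R :=
  N%:R^-1 * \sum_(n < N) cosv (f n xb) (g (Enc n xh)).
Definition mu_f (u : Img) : 'rV[R]_D1 :=
  N%:R^-1 *: \sum_(n < N) f n u.
Definition ApproxErr (x xb : Img) : R :=
  N%:R^-1 * \sum_(n < N) norm2 (f n x - f n xb) ^+ 2.
Definition MisREPA (u : Img) : R :=
  N%:R^-1 * \sum_(n < N) norm2 (f n u - g (Enc n u)) ^+ 2.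
End Quantities.

Definition MMD_DINOv2 {d} {Omega : measurableType d} {R : realType}
  {Img : Type} {N D1 : nat} (P : probability Omega R)
  (f : 'I_N -> Img -> 'rV[R]_D1) (x xh : Omega -> Img) : R :=
  norm2 (Exv P (fun w => mu_f f (x w)) - Exv P (fun w => mu_f f (xh w))) ^+ 2.

(* Main.v *)
Require Import Defs.
From HB Require Import structures.
From mathcomp Require Import all_boot all_order all_algebra.
From mathcomp Require Import all_classical all_reals all_analysis.
From mathcomp Require Import ring lra measurable_realfun.
Import Order.TTheory GRing.Theory Num.Theory.
Local Open Scope ring_scope.
Local Open Scope classical_set_scope.
Set Implicit Arguments. Unset Strict Implicit.

Section Helpers.
Context {R : realType} {d : measure_display} {Omega : measurableType d}
  (P : probability Omega R).

Definition good (X : Omega -> R) :=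
  measurable_fun setT X /\ exists M, forall w, `|X w| <= M.

Lemma good_ext X Y : (forall w, X w = Y w) -> good X -> good Y.
Proof. by move=> e; have -> : Y = X by apply/funext=> w; rewrite e. Qed.

Lemma good_cst c : good (fun _ => c).
Proof. split; first exact: measurable_cst. by exists `|c|. Qed.

Lemma good_add X Y : good X -> good Y -> good (fun w => X w + Y w).
Proof.
move=> [mX [M1 h1]] [mY [M2 h2]]; split; first exact: measurable_funD.
by exists (M1 + M2) => w; apply: le_trans (ler_normD _ _) _; exact: lerD.
Qed.

Lemma good_mul X Y : good X -> good Y -> good (fun w => X w * Y w).
Proof.
move=> [mX [M1 h1]] [mY [M2 h2]]; split; first exact: measurable_funM.
by exists (M1 * M2) => w; rewrite normrM; apply: ler_pM.
Qed.

Lemma good_opp X : good X -> good (fun w => - X w).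
Proof.
by move=> gX; apply: good_ext (good_mul (good_cst (-1)) gX) => w; rewrite mulN1r.
Qed.

Lemma good_sub X Y : good X -> good Y -> good (fun w => X w - Y w).
Proof. by move=> gX gY; apply: good_add gX (good_opp gY). Qed.

Lemma good_sum (I : Type) (s : seq I) (F : I -> Omega -> R) :
  (forall i, good (F i)) -> good (fun w => \sum_(i <- s) F i w).
Proof.
move=> gF; elim: s => [|a s IH].
  by apply: good_ext (good_cst 0) => w; rewrite big_nil.
by apply: good_ext (good_add (gF a) IH) => w; rewrite big_cons.
Qed.

Lemma good_int X : good X -> P.-integrable setT (EFin \o X).
Proof.
move=> [mX [M hM]]; apply: measurable_bounded_integrable => //.
  by apply: (le_lt_trans (probability_le1 _ _) (ltry _)).
rewrite /bounded_near; near=> M' => w _ /=.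
apply: le_trans (hM w) _; apply: le_trans (ler_norm M) _.
near: M'; apply: nbhs_pinfty_ge; exact: normr_real.
Unshelve. all: by end_near. Qed.

Lemma Ex_ext X Y : (forall w, X w = Y w) -> Ex P X = Ex P Y.
Proof. by move=> e; have -> : Y = X by apply/funext=> w; rewrite e. Qed.

Lemma Ex_add X Y : good X -> good Y -> Ex P (fun w => X w + Y w) = Ex P X + Ex P Y.
Proof. by move=> gX gY; rewrite /Ex RintegralD //; apply: good_int. Qed.

Lemma Ex_scale c X : good X -> Ex P (fun w => c * X w) = c * Ex P X.
Proof. by move=> gX; rewrite /Ex RintegralZl //; apply: good_int. Qed.

Lemma Ex_cst c : Ex P (fun _ => c) = c.
Proof.
rewrite /Ex Rintegral_cst // -[RHS]mulr1; congr (_ * _).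
by rewrite -[1]/(fine 1%E); congr fine; exact: probability_setT.
Qed.

Lemma Ex_le X Y : good X -> good Y -> (forall w, X w <= Y w) -> Ex P X <= Ex P Y.
Proof. by move=> gX gY h; rewrite /Ex le_Rintegral //; apply: good_int. Qed.

Lemma Ex_sum (I : Type) (s : seq I) (F : I -> Omega -> R) :
  (forall i, good (F i)) ->
  Ex P (fun w => \sum_(i <- s) F i w) = \sum_(i <- s) Ex P (F i).
Proof.
move=> gF; elim: s => [|a s IH].
  rewrite big_nil -[RHS](Ex_cst 0); apply: Ex_ext => w; by rewrite big_nil.
rewrite big_cons -IH -Ex_add //; last exact: good_sum.
by apply: Ex_ext => w; rewrite big_cons.
Qed.

Lemma Ex_var X : good X -> Ex P X ^+ 2 <= Ex P (fun w => X w ^+ 2).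
Proof.
move=> gX; set m := Ex P X.
have h0 : 0 <= Ex P (fun w => (X w - m) ^+ 2).
  by rewrite /Ex; apply: Rintegral_ge0 => w _; exact: sqr_ge0.
have gX2 : good (fun w => X w ^+ 2).
  by apply: good_ext (good_mul gX gX) => w; rewrite expr2.
have e : Ex P (fun w => (X w - m) ^+ 2) = Ex P (fun w => X w ^+ 2) - 2 * m * m + m ^+ 2.
  rewrite (Ex_ext (Y := fun w => X w ^+ 2 + ((- (2 * m)) * X w + m ^+ 2))); last first.
    by move=> w; rewrite sqrrB; ring.
  rewrite Ex_add //; last by apply: good_add (good_cst _); apply: good_mul (good_cst _) gX.
  rewrite Ex_add //; last exact: good_cst.
  rewrite Ex_scale // Ex_cst -/m; first ring.
  exact: good_mul (good_cst _) gX.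
rewrite e in h0; lra.
Qed.

End Helpers.

Section Vec.
Context {R : realType}.

Lemma nsq (D : nat) (v : 'rV[R]_D) : norm2 v ^+ 2 = \sum_(i < D) v 0 i ^+ 2.
Proof.
rewrite /norm2 sqr_sqrtr /dotv; last by apply: sumr_ge0 => i _; rewrite -expr2 sqr_ge0.
by apply: eq_bigr => i _; rewrite expr2.
Qed.

Lemma unit_sum (D : nat) (v : 'rV[R]_D) : norm2 v = 1 -> \sum_(i < D) v 0 i ^+ 2 = 1.
Proof. by move=> h; rewrite -nsq h expr1n. Qed.

Lemma comp_le1 (D : nat) (v : 'rV[R]_D) : norm2 v = 1 -> forall i, `|v 0 i| <= 1.
Proof.
move=> /unit_sum h i.
have : v 0 i ^+ 2 <= 1.
  rewrite -h (bigD1 i) //= lerDl; apply: sumr_ge0 => j _; exact: sqr_ge0.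
rewrite -real_normK ?num_real // => h2.
rewrite -(@expr_le1 _ 2) //.
Qed.

Lemma jensen_fin (N : nat) (y : 'I_N -> R) : (0 < N)%N ->
  (N%:R^-1 * \sum_(n < N) y n) ^+ 2 <= N%:R^-1 * \sum_(n < N) y n ^+ 2.
Proof.
move=> hN; set k : R := N%:R; set s := \sum_(n < N) y n; set q := \sum_(n < N) y n ^+ 2.
have kpos : 0 < k by rewrite /k ltr0n.
set t := k^-1.
have tk : t * k = 1 by rewrite /t mulVf // gt_eqF.
have tpos : 0 < t by rewrite /t invr_gt0.
have h : 0 <= \sum_(n < N) (y n - t * s) ^+ 2 by apply: sumr_ge0 => n _; exact: sqr_ge0.
have e : \sum_(n < N) (y n - t * s) ^+ 2 = q - 2 * (t * s) * s + k * (t * s) ^+ 2.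
  rewrite (eq_bigr (fun n => y n ^+ 2 + ((- (2 * (t * s))) * y n + (t * s) ^+ 2))); last first.
    by move=> n _; rewrite sqrrB; ring.
  rewrite !big_split /= -mulr_sumr sumr_const card_ord -/s -/q /k -mulr_natl; ring.
rewrite e in h.
have h' : 0 <= t * (q - 2 * (t * s) * s + k * (t * s) ^+ 2) by apply: mulr_ge0 => //; exact: ltW.
rewrite (_ : t * (q - 2 * (t * s) * s + k * (t * s) ^+ 2) = t * q - (t * s) ^+ 2 * (2 - t * k)) in h'; last by ring.
rewrite tk (_ : 2 - 1 = 1 :> R) ?mulr1 ?subr_ge0 in h' => //.
by rewrite (_ : 2 = 1 + 1 :> R) // addrK.
Qed.

Lemma sum5 (I : finType) (X1 X2 X3 X4 X5 : I -> R) (p1 p2 p3 p4 p5 : R) :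
  \sum_i (p1 * X1 i + p2 * X2 i + p3 * X3 i + p4 * X4 i + p5 * X5 i) =
  p1 * \sum_i X1 i + p2 * \sum_i X2 i + p3 * \sum_i X3 i + p4 * \sum_i X4 i
  + p5 * \sum_i X5 i.
Proof. by rewrite !big_split /= -!mulr_sumr. Qed.

Lemma pt (a b c e : R) :
  a * b <= 2^-1 * a ^+ 2 + 2^-1 * b ^+ 2 + (- 8^-1) * (e - c) ^+ 2
           + 2^-1 * (e - a) ^+ 2 + 4^-1 * (c - b) ^+ 2.
Proof.
have h1 := sqr_ge0 ((e - a) - (a - b)).
have h2 := sqr_ge0 ((e - a) + (a - b) - (b - c)).
rewrite -subr_ge0.
have -> : 2^-1 * a ^+ 2 + 2^-1 * b ^+ 2 + (- 8^-1) * (e - c) ^+ 2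
           + 2^-1 * (e - a) ^+ 2 + 4^-1 * (c - b) ^+ 2 - a * b
   = 8^-1 * (2 * ((e - a) - (a - b)) ^+ 2 + ((e - a) + (a - b) - (b - c)) ^+ 2).
  by field.
apply: mulr_ge0; first by rewrite invr_ge0.
apply: addr_ge0; last exact: sqr_ge0.
apply: mulr_ge0 => //; exact: sqr_ge0.
Qed.
End Vec.

Unset Implicit Arguments. Set Strict Implicit.
Theorem proposition1 (R : realType) (N D1 D2 : nat)
  (hN : (0 < N)%N) (hD1 : (0 < D1)%N) (hD2 : (0 < D2)%N)
  (dI : measure_display) (Img : measurableType dI)
  (f : 'I_N -> Img -> 'rV[R]_D1) (Enc : 'I_N -> Img -> 'rV[R]_D2)
  (g : 'rV[R]_D2 -> 'rV[R]_D1)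
  (f_meas : forall n i, measurable_fun setT (fun u => f n u 0 i))
  (gEnc_meas : forall n i, measurable_fun setT (fun u => g (Enc n u) 0 i))
  (f_unit : forall n u, norm2 (f n u) = 1)
  (gEnc_unit : forall n u, norm2 (g (Enc n u)) = 1)
  (d : measure_display) (Omega : measurableType d) (P : probability Omega R)
  (x xbar xhat : Omega -> Img)
  (x_meas : measurable_fun setT x) (xbar_meas : measurable_fun setT xbar)
  (xhat_meas : measurable_fun setT xhat) :
  Ex P (fun w => REPA f Enc g (xbar w) (xhat w))
  <= 1 - 8^-1 * MMD_DINOv2 P f x xhat
       + 2^-1 * Ex P (fun w => ApproxErr f (x w) (xbar w))
       + 4^-1 * Ex P (fun w => MisREPA f Enc g (xhat w)).
Proof.
pose e n i w := f n (x w) 0 i.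
pose a n i w := f n (xbar w) 0 i.
pose c n i w := f n (xhat w) 0 i.
pose b n i w := g (Enc n (xhat w)) 0 i.
have gfu : forall (y : Omega -> Img), measurable_fun setT y ->
    forall n i, good (fun w => f n (y w) 0 i).
  move=> y my n i; split; first exact: (measurableT_comp (f_meas n i) my).
  by exists 1 => w; apply: comp_le1.
have ge : forall n i, good (e n i) by exact: gfu.
have ga : forall n i, good (a n i) by exact: gfu.
have gc : forall n i, good (c n i) by exact: gfu.
have gb : forall n i, good (b n i).
  move=> n i; split; first exact: (measurableT_comp (gEnc_meas n i) xhat_meas).
  by exists 1 => w; apply: comp_le1.
have gsq : forall X Y : Omega -> R, good X -> good Y -> good (fun w => (X w - Y w) ^+ 2).
  move=> X Y gX gY; apply: (good_ext _ (good_mul (good_sub gX gY) (good_sub gX gY))).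
  by move=> w; rewrite expr2.
have gdsum : forall (F : 'I_N -> 'I_D1 -> Omega -> R), (forall n i, good (F n i)) ->
    good (fun w => N%:R^-1 * \sum_(n < N) \sum_(i < D1) F n i w).
  move=> F gF; apply: good_mul (good_cst _) _.
  by apply: good_sum => n; apply: good_sum => i; exact: gF.
pose S w := N%:R^-1 * \sum_(n < N) \sum_(i < D1) (e n i w - c n i w) ^+ 2.
pose A w := N%:R^-1 * \sum_(n < N) \sum_(i < D1) (e n i w - a n i w) ^+ 2.
pose M w := N%:R^-1 * \sum_(n < N) \sum_(i < D1) (c n i w - b n i w) ^+ 2.
have gS : good S by apply: gdsum => n i; exact: gsq.
have gA : good A by apply: gdsum => n i; exact: gsq.
have gM : good M by apply: gdsum => n i; exact: gsq.
have hA : Ex P (fun w => ApproxErr f (x w) (xbar w)) = Ex P A.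
  apply: Ex_ext => w; rewrite /ApproxErr /A; congr (_ * _); apply: eq_bigr => n _.
  by rewrite nsq; apply: eq_bigr => i _; rewrite !mxE.
have hM : Ex P (fun w => MisREPA f Enc g (xhat w)) = Ex P M.
  apply: Ex_ext => w; rewrite /MisREPA /M; congr (_ * _); apply: eq_bigr => n _.
  by rewrite nsq; apply: eq_bigr => i _; rewrite !mxE.
have hR : Ex P (fun w => REPA f Enc g (xbar w) (xhat w)) =
    Ex P (fun w => N%:R^-1 * \sum_(n < N) \sum_(i < D1) (a n i w * b n i w)).
  apply: Ex_ext => w; rewrite /REPA; congr (_ * _); apply: eq_bigr => n _.
  by rewrite /cosv f_unit gEnc_unit mulr1 invr1 mulr1.
have hMMD : MMD_DINOv2 P f x xhat <= Ex P S.
  pose V i w := N%:R^-1 * \sum_(n < N) (e n i w - c n i w).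
  have gV : forall i, good (V i).
    by move=> i; apply: good_mul (good_cst _) _; apply: good_sum => n; exact: good_sub.
  have gE1 : forall i, good (fun w => N%:R^-1 * \sum_(n < N) e n i w).
    by move=> i; apply: good_mul (good_cst _) _; apply: good_sum => n.
  have gC1 : forall i, good (fun w => N%:R^-1 * \sum_(n < N) c n i w).
    by move=> i; apply: good_mul (good_cst _) _; apply: good_sum => n.
  have hV : forall i, (Exv P (fun w => mu_f f (x w)) - Exv P (fun w => mu_f f (xhat w))) 0 i
      = Ex P (V i).
    move=> i; rewrite !mxE.
    rewrite (Ex_ext P (X := fun w => mu_f f (x w) 0 i)
                    (Y := fun w => N%:R^-1 * \sum_(n < N) e n i w)); last first.
      by move=> w; rewrite /mu_f !mxE summxE.
    rewrite (Ex_ext P (X := fun w => mu_f f (xhat w) 0 i)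
                    (Y := fun w => N%:R^-1 * \sum_(n < N) c n i w)); last first.
      by move=> w; rewrite /mu_f !mxE summxE.
    rewrite (Ex_ext P (X := V i) (Y := fun w => N%:R^-1 * \sum_(n < N) e n i w
                  + (-1) * (N%:R^-1 * \sum_(n < N) c n i w))); last first.
      by move=> w; rewrite /V sumrB; ring.
    rewrite Ex_add //; last by apply: good_mul (good_cst _) _.
    by rewrite (Ex_scale P _ (gC1 i)); ring.
  rewrite /MMD_DINOv2 nsq.
  rewrite (eq_bigr (fun i => Ex P (V i) ^+ 2)); last by move=> i _; rewrite hV.
  apply: le_trans (ler_sum _ (fun i _ => Ex_var P (gV i))) _.
  have gV2 : forall i, good (fun w => V i w ^+ 2).
    by move=> i; apply: (good_ext _ (good_mul (gV i) (gV i))) => w; rewrite expr2.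
  rewrite -(Ex_sum P _ (F := fun i w => V i w ^+ 2)) //.
  apply: Ex_le => //; first by apply: good_sum.
  move=> w.
  apply: le_trans (ler_sum _ (fun i _ => jensen_fin (fun n => e n i w - c n i w) hN)) _.
  by rewrite /S -mulr_sumr exchange_big.
have step1 : Ex P (fun w => N%:R^-1 * \sum_(n < N) \sum_(i < D1) (a n i w * b n i w))
    <= Ex P (fun w => 1 + ((- 8^-1) * S w + (2^-1 * A w + 4^-1 * M w))).
  apply: Ex_le.
  - apply: gdsum => n i; exact: good_mul.
  - apply: good_add (good_cst _) _; apply: good_add; first exact: good_mul (good_cst _) gS.
    by apply: good_add; apply: good_mul (good_cst _) _.
  move=> w.
  have hNz : N%:R != 0 :> R by rewrite pnatr_eq0 -lt0n hN.
  have hT : forall n, \sum_(i < D1) (a n i w * b n i w) <=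
      1 + ((- 8^-1) * \sum_(i < D1) (e n i w - c n i w) ^+ 2
          + (2^-1 * \sum_(i < D1) (e n i w - a n i w) ^+ 2
             + 4^-1 * \sum_(i < D1) (c n i w - b n i w) ^+ 2)).
    move=> n.
    apply: le_trans (ler_sum _ (fun i _ => pt (a n i w) (b n i w) (c n i w) (e n i w))) _.
    rewrite sum5.
    have ha := unit_sum (f_unit n (xbar w)).
    have hb := unit_sum (gEnc_unit n (xhat w)).
    rewrite [\sum_(i < D1) a n i w ^+ 2]ha [\sum_(i < D1) b n i w ^+ 2]hb.
    rewrite le_eqVlt; apply/orP; left; apply/eqP.
    have -> : \sum_(i < D1) (c n i w - b n i w) ^+ 2 = \sum_(i < D1) (b n i w - c n i w) ^+ 2.
      by apply: eq_bigr => i _; rewrite -sqrrN opprB.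
    by field.
  apply: le_trans (ler_wpM2l _ (ler_sum _ (fun n _ => hT n))) _.
    by rewrite invr_ge0 ler0n.
  rewrite /S /A /M !big_split /= -!mulr_sumr sumr_const card_ord.
  rewrite le_eqVlt; apply/orP; left; apply/eqP.
  by field.
have step2 : Ex P (fun w => 1 + ((- 8^-1) * S w + (2^-1 * A w + 4^-1 * M w)))
    = 1 + ((- 8^-1) * Ex P S + (2^-1 * Ex P A + 4^-1 * Ex P M)).
  rewrite Ex_add; last first.
  - apply: good_add; first exact: good_mul (good_cst _) gS.
    by apply: good_add; apply: good_mul (good_cst _) _.
  - exact: good_cst.
  rewrite Ex_cst Ex_add; last first.
  - by apply: good_add; apply: good_mul (good_cst _) _.
  - exact: good_mul (good_cst _) gS.
  rewrite Ex_add; last first.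
  - exact: good_mul (good_cst _) gM.
  - exact: good_mul (good_cst _) gA.
  by rewrite (Ex_scale P _ gS) (Ex_scale P _ gA) (Ex_scale P _ gM).
rewrite hR; apply: (le_trans step1); rewrite step2.
move: hA hM.
set EA := Ex P (fun w => ApproxErr _ _ _). set EM := Ex P (fun w => MisREPA _ _ _ _).
move=> -> ->.
have h8 : 0 <= 8^-1 :> R by rewrite invr_ge0.
have := ler_wpM2l h8 hMMD; lra.
Qed.
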